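(* Let $k\ge1$, $1\le r\le4k^2$, and let $\overline{\mathcal{B}}(2k,2k;r)$ be the set of boards in $\mathcal{B}(2k,2k;r)$ whose board partition $(\lambda_1,\lambda_2,\lambda_3,\lambda_4)$ satisfies: $\lambda_1\ge\lambda_i$ for all $i>1$; $\lambda_2\ge\lambda_4$; if $\lambda_1=\lambda_2$ then $\lambda_3\ge\lambda_4$. For a board partition $\lambda=(\lambda_1,\lambda_2,\lambda_3,\lambda_4)$ of some board in $\overline{\mathcal{B}}(2k,2k;r)$, let $K\le D_4$ be the subgroup of symmetries preserving the set of all boards with board partition $\lambda$. Then: if $\lambda_1=\lambda_2=\lambda_3=\lambda_4$, $K=D_4$ and $[D_4:K]=1$; if $\lambda_1=\lambda_3>\lambda_2=\lambda_4$, $K=\langle D,D'\rangle$ and $[D_4:K]=2$; if $\lambda_1=\lambda_2>\lambda_3=\lambda_4$, $K=\langle V\rangle$ and $[D_4:K]=4$; if $\lambda_1=\lambda_3$ and $\lambda_2\ne\lambda_4$, $K=\langle D'\rangle$ and $[D_4:K]=4$; if $\lambda_2=\lambda_4$ and $\lambda_1\ne\lambda_3$, $K=\langle D\rangle$ and $[D_4:K]=4$; in all other cases $K$ is trivial and $[D_4:K]=8$.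
   Context: A $2k\times2k$ grid with cells $(i,j)$, rows $i$ numbered top to bottom, columns $j$ left to right; $\mathcal{B}(2k,2k;r)$ is the set of boards, i.e. subsets of exactly $r$ blocked cells. $D_4$ is the symmetry group of the square acting on boards: rotations $R_0,R_{90},R_{180},R_{270}$ about the center, $H$ = reflection across the horizontal midline, $V$ = reflection across the vertical midline, $D$ = reflection across the main diagonal from top-left to bottom-right ($(i,j)\mapsto(j,i)$), $D'$ = reflection across the anti-diagonal from bottom-left to top-right ($(i,j)\mapsto(2k+1-j,2k+1-i)$). Quadrants: $Q_1$ = rows $1..k$, cols $1..k$; $Q_2$ = rows $1..k$, cols $k+1..2k$; $Q_3$ = rows $k+1..2k$, cols $k+1..2k$; $Q_4$ = rows $k+1..2k$, cols $1..k$; the board partition is $(\lambda_1,\dots,\lambda_4)$ with $\lambda_i$ the number of blocked cells in $Q_i$. *)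

(* Defs.v *)
From HB Require Import structures.
From mathcomp Require Import all_boot all_order all_fingroup.
Set Implicit Arguments. Unset Strict Implicit. Unset Printing Implicit Defensive.

(* Cells of the 2k x 2k grid, 0-indexed: cell (i,j) here is cell (i+1,j+1)
   of the paper.  rev_ord i = 2k-1-i corresponds to i |-> 2k+1-i. *)
Definition cell (k : nat) := ('I_(2 * k) * 'I_(2 * k))%type.

Section Sym.
Variable k : nat.
Local Notation rv := (@rev_ord (2 * k)).

Definition fR0   (c : cell k) : cell k := c.
Definition fR90  (c : cell k) : cell k := (c.2, rv c.1).
Definition fR180 (c : cell k) : cell k := (rv c.1, rv c.2).
Definition fR270 (c : cell k) : cell k := (rv c.2, c.1).
Definition fH    (c : cell k) : cell k := (rv c.1, c.2).
Definition fV    (c : cell k) : cell k := (c.1, rv c.2).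
Definition fD    (c : cell k) : cell k := (c.2, c.1).
Definition fD'   (c : cell k) : cell k := (rv c.2, rv c.1).

Lemma fR90K : cancel fR90 fR270.
Proof. by case=> i j; rewrite /fR90 /fR270 /= rev_ordK. Qed.
Lemma fR270K : cancel fR270 fR90.
Proof. by case=> i j; rewrite /fR90 /fR270 /= rev_ordK. Qed.
Lemma fR180K : involutive fR180.
Proof. by case=> i j; rewrite /fR180 /= !rev_ordK. Qed.
Lemma fHK : involutive fH.
Proof. by case=> i j; rewrite /fH /= !rev_ordK. Qed.
Lemma fVK : involutive fV.
Proof. by case=> i j; rewrite /fV /= !rev_ordK. Qed.
Lemma fDK : involutive fD.
Proof. by case=> i j. Qed.
Lemma fD'K : involutive fD'.
Proof. by case=> i j; rewrite /fD' /= !rev_ordK. Qed.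

Definition pR0   : {perm cell k} := perm (@inj_id (cell k)).
Definition pR90  : {perm cell k} := perm (can_inj fR90K).
Definition pR180 : {perm cell k} := perm (inv_inj fR180K).
Definition pR270 : {perm cell k} := perm (can_inj fR270K).
Definition pH    : {perm cell k} := perm (inv_inj fHK).
Definition pV    : {perm cell k} := perm (inv_inj fVK).
Definition pD    : {perm cell k} := perm (inv_inj fDK).
Definition pD'   : {perm cell k} := perm (inv_inj fD'K).

Definition D4 : {set {perm cell k}} :=
  [set pR0; pR90; pR180; pR270; pH; pV; pD; pD'].

Definition lam1 (B : {set cell k}) := #|[set c in B | (c.1 < k) && (c.2 < k)]|.
Definition lam2 (B : {set cell k}) := #|[set c in B | (c.1 < k) && (k <= c.2)]|.
Definition lam3 (B : {set cell k}) := #|[set c in B | (k <= c.1) && (k <= c.2)]|.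
Definition lam4 (B : {set cell k}) := #|[set c in B | (k <= c.1) && (c.2 < k)]|.

Definition board_partition (B : {set cell k}) : nat * nat * nat * nat :=
  (lam1 B, lam2 B, lam3 B, lam4 B).

Definition boards_with (r : nat) (lam : nat * nat * nat * nat)
  : {set {set cell k}} :=
  [set B : {set cell k} | (#|B| == r) && (board_partition B == lam)].

Definition Kstab (r : nat) (lam : nat * nat * nat * nat) : {set {perm cell k}} :=
  [set g in D4 | (fun X : {set cell k} => g @: X) @: boards_with r lam
                   == boards_with r lam].

Definition in_barB (r : nat) (B : {set cell k}) : bool :=
  [&& #|B| == r,
      lam2 B <= lam1 B, lam3 B <= lam1 B, lam4 B <= lam1 B,
      lam4 B <= lam2 B &
      (lam1 B == lam2 B) ==> (lam4 B <= lam3 B)].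
End Sym.

(* Main.v *)
Require Import Defs.
From mathcomp Require Import all_boot all_order all_fingroup zify.

Lemma rev_lt k (i : 'I_(2*k)) : (rev_ord i < k) = (k <= i).
Proof. rewrite /=; apply/idP/idP => /=; have := ltn_ord i; lia. Qed.
Lemma rev_ge k (i : 'I_(2*k)) : (k <= rev_ord i) = (i < k).
Proof. rewrite /=; apply/idP/idP => /=; have := ltn_ord i; lia. Qed.

Lemma card_quad k (g : {perm cell k}) (P Q : pred (cell k)) (X : {set cell k}) :
  (forall c, P (g c) = Q c) ->
  #|[set c in g @: X | P c]| = #|[set c in X | Q c]|.
Proof.
move=> H; rewrite -[RHS](card_imset _ (@perm_inj _ g)); apply: eq_card => c; have [d ->] : exists d, c = g d by exists (g^-1%g c); rewrite permKV.
by rewrite !inE !(mem_imset _ _ (@perm_inj _ g)) inE H.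
Qed.

Definition bp k := @board_partition k.

Ltac quad := move=> [i j]; rewrite permE /= ?rev_lt ?rev_ge //; by rewrite andbC.

Definition FR0 (l : nat*nat*nat*nat) := let: (a,b,c,d) := l in (a,b,c,d).
Lemma bpR0 k (X : {set cell k}) : board_partition (pR0 k @: X) = FR0 (board_partition X).
Proof. rewrite /board_partition /lam1 /lam2 /lam3 /lam4; congr (_,_,_,_); apply: card_quad; quad. Qed.
Definition FR90 (l : nat*nat*nat*nat) := let: (a,b,c,d) := l in (d,a,b,c).
Lemma bpR90 k (X : {set cell k}) : board_partition (pR90 k @: X) = FR90 (board_partition X).
Proof. rewrite /board_partition /lam1 /lam2 /lam3 /lam4; congr (_,_,_,_); apply: card_quad; quad. Qed.
Definition FR180 (l : nat*nat*nat*nat) := let: (a,b,c,d) := l in (c,d,a,b).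
Lemma bpR180 k (X : {set cell k}) : board_partition (pR180 k @: X) = FR180 (board_partition X).
Proof. rewrite /board_partition /lam1 /lam2 /lam3 /lam4; congr (_,_,_,_); apply: card_quad; quad. Qed.
Definition FR270 (l : nat*nat*nat*nat) := let: (a,b,c,d) := l in (b,c,d,a).
Lemma bpR270 k (X : {set cell k}) : board_partition (pR270 k @: X) = FR270 (board_partition X).
Proof. rewrite /board_partition /lam1 /lam2 /lam3 /lam4; congr (_,_,_,_); apply: card_quad; quad. Qed.
Definition FH (l : nat*nat*nat*nat) := let: (a,b,c,d) := l in (d,c,b,a).
Lemma bpH k (X : {set cell k}) : board_partition (pH k @: X) = FH (board_partition X).
Proof. rewrite /board_partition /lam1 /lam2 /lam3 /lam4; congr (_,_,_,_); apply: card_quad; quad. Qed.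
Definition FV (l : nat*nat*nat*nat) := let: (a,b,c,d) := l in (b,a,d,c).
Lemma bpV k (X : {set cell k}) : board_partition (pV k @: X) = FV (board_partition X).
Proof. rewrite /board_partition /lam1 /lam2 /lam3 /lam4; congr (_,_,_,_); apply: card_quad; quad. Qed.
Definition FD (l : nat*nat*nat*nat) := let: (a,b,c,d) := l in (a,d,c,b).
Lemma bpD k (X : {set cell k}) : board_partition (pD k @: X) = FD (board_partition X).
Proof. rewrite /board_partition /lam1 /lam2 /lam3 /lam4; congr (_,_,_,_); apply: card_quad; quad. Qed.
Definition FDp (l : nat*nat*nat*nat) := let: (a,b,c,d) := l in (c,b,a,d).
Lemma bpDp k (X : {set cell k}) : board_partition (pD' k @: X) = FDp (board_partition X).
Proof. rewrite /board_partition /lam1 /lam2 /lam3 /lam4; congr (_,_,_,_); apply: card_quad; quad. Qed.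

Lemma Kstab_mem k r (B : {set cell k}) (g : {perm cell k}) (F : nat*nat*nat*nat -> nat*nat*nat*nat) :
 #|B| = r -> (forall X : {set cell k}, board_partition (g @: X) = F (board_partition X)) ->
 (g \in Kstab k r (board_partition B)) = (g \in D4 k) && (F (board_partition B) == board_partition B).
Proof.
move=> hB HF; rewrite inE; case: (g \in D4 k) => //=.
set l := board_partition B.
apply/eqP/eqP => [E | E].
  have : g @: B \in boards_with k r l.
    by rewrite -E; apply: imset_f; rewrite inE hB eqxx /=.
  by rewrite inE => /andP [_ /eqP]; rewrite HF.
apply/eqP; rewrite eqEcard card_imset; last exact: imset_inj (@perm_inj _ g).
rewrite leqnn andbT; apply/subsetP => Y /imsetP [X HX ->].
move: HX; rewrite !inE => /andP [/eqP hX /eqP hl].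
by rewrite card_imset ?hX ?eqxx //= ?HF ?hl ?E ?eqxx //; apply: perm_inj.
Qed.

Lemma lt0k {k} : 0 < k -> 0 < 2*k. Proof. lia. Qed.
Lemma lt1k {k} : 0 < k -> 1 < 2*k. Proof. lia. Qed.
Definition o0 {k} (hk : 0 < k) : 'I_(2*k) := Ordinal (lt0k hk).
Definition o1 {k} (hk : 0 < k) : 'I_(2*k) := Ordinal (lt1k hk).
Definition sig {k} (hk : 0 < k) (g : {perm cell k}) :=
  (val (g (o0 hk, o0 hk)).1, val (g (o0 hk, o0 hk)).2, val (g (o0 hk, o1 hk)).1, val (g (o0 hk, o1 hk)).2).
Ltac neqtac hk := apply/negbTE/eqP => /(congr1 (sig hk)); rewrite /sig !permE /=; case=> *; lia.
Lemma neq_R0_R90 {k} (hk : 0 < k) : (pR0 k == pR90 k) = false. Proof. neqtac hk. Qed.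
Lemma neq_R0_R180 {k} (hk : 0 < k) : (pR0 k == pR180 k) = false. Proof. neqtac hk. Qed.
Lemma neq_R0_R270 {k} (hk : 0 < k) : (pR0 k == pR270 k) = false. Proof. neqtac hk. Qed.
Lemma neq_R0_H {k} (hk : 0 < k) : (pR0 k == pH k) = false. Proof. neqtac hk. Qed.
Lemma neq_R0_V {k} (hk : 0 < k) : (pR0 k == pV k) = false. Proof. neqtac hk. Qed.
Lemma neq_R0_D {k} (hk : 0 < k) : (pR0 k == pD k) = false. Proof. neqtac hk. Qed.
Lemma neq_R0_Dp {k} (hk : 0 < k) : (pR0 k == pD' k) = false. Proof. neqtac hk. Qed.
Lemma neq_R90_R0 {k} (hk : 0 < k) : (pR90 k == pR0 k) = false. Proof. neqtac hk. Qed.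
Lemma neq_R90_R180 {k} (hk : 0 < k) : (pR90 k == pR180 k) = false. Proof. neqtac hk. Qed.
Lemma neq_R90_R270 {k} (hk : 0 < k) : (pR90 k == pR270 k) = false. Proof. neqtac hk. Qed.
Lemma neq_R90_H {k} (hk : 0 < k) : (pR90 k == pH k) = false. Proof. neqtac hk. Qed.
Lemma neq_R90_V {k} (hk : 0 < k) : (pR90 k == pV k) = false. Proof. neqtac hk. Qed.
Lemma neq_R90_D {k} (hk : 0 < k) : (pR90 k == pD k) = false. Proof. neqtac hk. Qed.
Lemma neq_R90_Dp {k} (hk : 0 < k) : (pR90 k == pD' k) = false. Proof. neqtac hk. Qed.
Lemma neq_R180_R0 {k} (hk : 0 < k) : (pR180 k == pR0 k) = false. Proof. neqtac hk. Qed.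
Lemma neq_R180_R90 {k} (hk : 0 < k) : (pR180 k == pR90 k) = false. Proof. neqtac hk. Qed.
Lemma neq_R180_R270 {k} (hk : 0 < k) : (pR180 k == pR270 k) = false. Proof. neqtac hk. Qed.
Lemma neq_R180_H {k} (hk : 0 < k) : (pR180 k == pH k) = false. Proof. neqtac hk. Qed.
Lemma neq_R180_V {k} (hk : 0 < k) : (pR180 k == pV k) = false. Proof. neqtac hk. Qed.
Lemma neq_R180_D {k} (hk : 0 < k) : (pR180 k == pD k) = false. Proof. neqtac hk. Qed.
Lemma neq_R180_Dp {k} (hk : 0 < k) : (pR180 k == pD' k) = false. Proof. neqtac hk. Qed.
Lemma neq_R270_R0 {k} (hk : 0 < k) : (pR270 k == pR0 k) = false. Proof. neqtac hk. Qed.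
Lemma neq_R270_R90 {k} (hk : 0 < k) : (pR270 k == pR90 k) = false. Proof. neqtac hk. Qed.
Lemma neq_R270_R180 {k} (hk : 0 < k) : (pR270 k == pR180 k) = false. Proof. neqtac hk. Qed.
Lemma neq_R270_H {k} (hk : 0 < k) : (pR270 k == pH k) = false. Proof. neqtac hk. Qed.
Lemma neq_R270_V {k} (hk : 0 < k) : (pR270 k == pV k) = false. Proof. neqtac hk. Qed.
Lemma neq_R270_D {k} (hk : 0 < k) : (pR270 k == pD k) = false. Proof. neqtac hk. Qed.
Lemma neq_R270_Dp {k} (hk : 0 < k) : (pR270 k == pD' k) = false. Proof. neqtac hk. Qed.
Lemma neq_H_R0 {k} (hk : 0 < k) : (pH k == pR0 k) = false. Proof. neqtac hk. Qed.
Lemma neq_H_R90 {k} (hk : 0 < k) : (pH k == pR90 k) = false. Proof. neqtac hk. Qed.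
Lemma neq_H_R180 {k} (hk : 0 < k) : (pH k == pR180 k) = false. Proof. neqtac hk. Qed.
Lemma neq_H_R270 {k} (hk : 0 < k) : (pH k == pR270 k) = false. Proof. neqtac hk. Qed.
Lemma neq_H_V {k} (hk : 0 < k) : (pH k == pV k) = false. Proof. neqtac hk. Qed.
Lemma neq_H_D {k} (hk : 0 < k) : (pH k == pD k) = false. Proof. neqtac hk. Qed.
Lemma neq_H_Dp {k} (hk : 0 < k) : (pH k == pD' k) = false. Proof. neqtac hk. Qed.
Lemma neq_V_R0 {k} (hk : 0 < k) : (pV k == pR0 k) = false. Proof. neqtac hk. Qed.
Lemma neq_V_R90 {k} (hk : 0 < k) : (pV k == pR90 k) = false. Proof. neqtac hk. Qed.
Lemma neq_V_R180 {k} (hk : 0 < k) : (pV k == pR180 k) = false. Proof. neqtac hk. Qed.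
Lemma neq_V_R270 {k} (hk : 0 < k) : (pV k == pR270 k) = false. Proof. neqtac hk. Qed.
Lemma neq_V_H {k} (hk : 0 < k) : (pV k == pH k) = false. Proof. neqtac hk. Qed.
Lemma neq_V_D {k} (hk : 0 < k) : (pV k == pD k) = false. Proof. neqtac hk. Qed.
Lemma neq_V_Dp {k} (hk : 0 < k) : (pV k == pD' k) = false. Proof. neqtac hk. Qed.
Lemma neq_D_R0 {k} (hk : 0 < k) : (pD k == pR0 k) = false. Proof. neqtac hk. Qed.
Lemma neq_D_R90 {k} (hk : 0 < k) : (pD k == pR90 k) = false. Proof. neqtac hk. Qed.
Lemma neq_D_R180 {k} (hk : 0 < k) : (pD k == pR180 k) = false. Proof. neqtac hk. Qed.
Lemma neq_D_R270 {k} (hk : 0 < k) : (pD k == pR270 k) = false. Proof. neqtac hk. Qed.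
Lemma neq_D_H {k} (hk : 0 < k) : (pD k == pH k) = false. Proof. neqtac hk. Qed.
Lemma neq_D_V {k} (hk : 0 < k) : (pD k == pV k) = false. Proof. neqtac hk. Qed.
Lemma neq_D_Dp {k} (hk : 0 < k) : (pD k == pD' k) = false. Proof. neqtac hk. Qed.
Lemma neq_Dp_R0 {k} (hk : 0 < k) : (pD' k == pR0 k) = false. Proof. neqtac hk. Qed.
Lemma neq_Dp_R90 {k} (hk : 0 < k) : (pD' k == pR90 k) = false. Proof. neqtac hk. Qed.
Lemma neq_Dp_R180 {k} (hk : 0 < k) : (pD' k == pR180 k) = false. Proof. neqtac hk. Qed.
Lemma neq_Dp_R270 {k} (hk : 0 < k) : (pD' k == pR270 k) = false. Proof. neqtac hk. Qed.
Lemma neq_Dp_H {k} (hk : 0 < k) : (pD' k == pH k) = false. Proof. neqtac hk. Qed.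
Lemma neq_Dp_V {k} (hk : 0 < k) : (pD' k == pV k) = false. Proof. neqtac hk. Qed.
Lemma neq_Dp_D {k} (hk : 0 < k) : (pD' k == pD k) = false. Proof. neqtac hk. Qed.
Ltac neqs hk := rewrite ?(neq_R0_R90 hk) ?(neq_R0_R180 hk) ?(neq_R0_R270 hk) ?(neq_R0_H hk) ?(neq_R0_V hk) ?(neq_R0_D hk) ?(neq_R0_Dp hk) ?(neq_R90_R0 hk) ?(neq_R90_R180 hk) ?(neq_R90_R270 hk) ?(neq_R90_H hk) ?(neq_R90_V hk) ?(neq_R90_D hk) ?(neq_R90_Dp hk) ?(neq_R180_R0 hk) ?(neq_R180_R90 hk) ?(neq_R180_R270 hk) ?(neq_R180_H hk) ?(neq_R180_V hk) ?(neq_R180_D hk) ?(neq_R180_Dp hk) ?(neq_R270_R0 hk) ?(neq_R270_R90 hk) ?(neq_R270_R180 hk) ?(neq_R270_H hk) ?(neq_R270_V hk) ?(neq_R270_D hk) ?(neq_R270_Dp hk) ?(neq_H_R0 hk) ?(neq_H_R90 hk) ?(neq_H_R180 hk) ?(neq_H_R270 hk) ?(neq_H_V hk) ?(neq_H_D hk) ?(neq_H_Dp hk) ?(neq_V_R0 hk) ?(neq_V_R90 hk) ?(neq_V_R180 hk) ?(neq_V_R270 hk) ?(neq_V_H hk) ?(neq_V_D hk) ?(neq_V_Dp hk) ?(neq_D_R0 hk) ?(neq_D_R90 hk) ?(neq_D_R180 hk) ?(neq_D_R270 hk) ?(neq_D_H hk) ?(neq_D_V hk) ?(neq_D_Dp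 hk) ?(neq_Dp_R0 hk) ?(neq_Dp_R90 hk) ?(neq_Dp_R180 hk) ?(neq_Dp_R270 hk) ?(neq_Dp_H hk) ?(neq_Dp_V hk) ?(neq_Dp_D hk).

Lemma cardD4 k (hk : 0 < k) : #|D4 k| = 8.
Proof. rewrite /D4 -!setUA !cardsU1 !cards1 !inE; neqs hk; done. Qed.

Lemma pR0_1 k : pR0 k = 1%g.
Proof. by apply/permP => c; rewrite !permE. Qed.

Lemma D4P k g : g \in D4 k -> g = pR0 k \/ g = pR90 k \/ g = pR180 k \/ g = pR270 k \/ g = pH k \/ g = pV k \/ g = pD k \/ g = pD' k.
Proof.
rewrite !inE.
case/orP; last by move/eqP->; right; right; right; right; right; right; right; done.
case/orP; last by move/eqP->; right; right; right; right; right; right; left; done.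
case/orP; last by move/eqP->; right; right; right; right; right; left; done.
case/orP; last by move/eqP->; right; right; right; right; left; done.
case/orP; last by move/eqP->; right; right; right; left; done.
case/orP; last by move/eqP->; right; right; left; done.
case/orP; last by move/eqP->; right; left; done.
by move/eqP->; left.
Qed.

Ltac permeq := apply/permP => -[i j]; rewrite permM !permE /fR0 /fR90 /fR180 /fR270 /fH /fV /fD /fD' /= ?rev_ordK.
Ltac prodin k :=
  first [ rewrite (_ : (_ * _)%g = pR0 k); [by rewrite !inE eqxx ?orbT | by permeq] | rewrite (_ : (_ * _)%g = pR90 k); [by rewrite !inE eqxx ?orbT | by permeq] | rewrite (_ : (_ * _)%g = pR180 k); [by rewrite !inE eqxx ?orbT | by permeq] | rewrite (_ : (_ * _)%g = pR270 k); [by rewrite !inE eqxx ?orbT | by permeq] | rewrite (_ : (_ * _)%g = pH k); [by rewrite !inE eqxx ?orbT | by permeq] | rewrite (_ : (_ * _)%g = pV k); [by rewrite !inE eqxx ?orbT | by permeq] | rewrite (_ : (_ * _)%g = pD k); [by rewrite !inE eqxx ?orbT | by permeq] | rewrite (_ : (_ * _)%g = pD' k); [by rewrite !inE eqxx ?orbT | by permeq] ].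

Lemma D4gs k : group_set (D4 k).
Proof.
apply/group_setP; split; first by rewrite -pR0_1 !inE eqxx.
move=> x y /D4P [->|[->|[->|[->|[->|[->|[->|->]]]]]]] /D4P [->|[->|[->|[->|[->|[->|[->|->]]]]]]]; prodin k.
Qed.

Lemma cycle_inv k (x : {perm cell k}) : (x * x = 1)%g -> <[x]>%g = [set 1%g; x].
Proof.
move=> E.
have gs : group_set [set 1%g; x].
  apply/group_setP; split; first by rewrite !inE eqxx.
  by move=> a b; rewrite !inE => /orP[]/eqP-> /orP[]/eqP->; rewrite ?mul1g ?mulg1 ?E eqxx ?orbT.
apply/eqP; rewrite eqEsubset; apply/andP; split.
  by rewrite (cycle_subG x (Group gs)) /= !inE eqxx orbT.
by rewrite subUset !sub1set group1 cycle_id.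
Qed.

Lemma invV k : (pV k * pV k = 1)%g. Proof. by rewrite -pR0_1; permeq. Qed.
Lemma invD k : (pD k * pD k = 1)%g. Proof. by rewrite -pR0_1; permeq. Qed.
Lemma invD' k : (pD' k * pD' k = 1)%g. Proof. by rewrite -pR0_1; permeq. Qed.

Lemma genDD' k : <<[set pD k; pD' k]>>%g = [set pR0 k; pD k; pD' k; pR180 k].
Proof.
have gs : group_set [set pR0 k; pD k; pD' k; pR180 k].
  apply/group_setP; split; first by rewrite -pR0_1 !inE eqxx.
  move=> x y; rewrite -!setUA => /setU1P [->|/setU1P [->|/setU1P [->|/set1P ->]]]
    /setU1P [->|/setU1P [->|/setU1P [->|/set1P ->]]]; prodin k.
apply/eqP; rewrite eqEsubset; apply/andP; split.
  by rewrite (gen_subG _ (Group gs)) /= subUset !sub1set !inE !eqxx ?orbT.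
rewrite (_ : pR180 k = pD k * pD' k)%g; last by apply/esym; permeq.
rewrite !subUset !sub1set pR0_1 group1 groupM ?mem_gen // !inE eqxx ?orbT //.
Qed.

Lemma idxD4 k (hk : 0 < k) (H : {group {perm cell k}}) :
  H \subset D4 k -> #|D4 k : H|%g = 8 %/ #|H|.
Proof.
move=> sub; have := Lagrange (G := Group (D4gs k)) sub.
rewrite /= cardD4 // => <-; rewrite mulKn //; exact: cardG_gt0.
Qed.

Lemma eq_D4sub k (S T : {set {perm cell k}}) : S \subset D4 k -> T \subset D4 k ->
  (pR0 k \in S) = (pR0 k \in T) -> (pR90 k \in S) = (pR90 k \in T) ->
  (pR180 k \in S) = (pR180 k \in T) -> (pR270 k \in S) = (pR270 k \in T) ->
  (pH k \in S) = (pH k \in T) -> (pV k \in S) = (pV k \in T) ->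
  (pD k \in S) = (pD k \in T) -> (pD' k \in S) = (pD' k \in T) -> S = T.
Proof.
move=> sS sT e1 e2 e3 e4 e5 e6 e7 e8; apply/setP => g.
case: (boolP (g \in D4 k)) => [/D4P [->|[->|[->|[->|[->|[->|[->|->]]]]]]] //| hg].
by rewrite (contraNF (subsetP sS g) hg) (contraNF (subsetP sT g) hg).
Qed.


Ltac fin := repeat match goal with H : (_ \in _) = _ |- _ => clear H | H : is_true (_ \subset _) |- _ => clear H end; first [ done | lia | apply/idP/idP; move=> HH; (done || lia) ].

Theorem corollary4p2 (k r : nat) (B : {set cell k}) :
  1 <= k -> 1 <= r <= 4 * k ^ 2 -> in_barB r B ->
  let l1 := lam1 B in let l2 := lam2 B in let l3 := lam3 B in let l4 := lam4 B in
  let K := Kstab k r (board_partition B) in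
  ((l1 = l2 /\ l2 = l3 /\ l3 = l4) ->
        K = D4 k /\ #|D4 k : K|%g = 1) /\
  (      (l1 = l3 /\ l3 > l2 /\ l2 = l4) ->
        K = <<[set pD k; pD' k]>>%g /\ #|D4 k : K|%g = 2) /\
  (      (l1 = l2 /\ l2 > l3 /\ l3 = l4) ->
        K = <[pV k]>%g /\ #|D4 k : K|%g = 4) /\
  (      (l1 = l3 /\ l2 <> l4) ->
        K = <[pD' k]>%g /\ #|D4 k : K|%g = 4) /\
  (      (l2 = l4 /\ l1 <> l3) ->
        K = <[pD k]>%g /\ #|D4 k : K|%g = 4) /\
  (      (~ (l1 = l2 /\ l2 = l3 /\ l3 = l4) /\
       ~ (l1 = l3 /\ l3 > l2 /\ l2 = l4) /\
       ~ (l1 = l2 /\ l2 > l3 /\ l3 = l4) /\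
       ~ (l1 = l3 /\ l2 <> l4) /\
       ~ (l2 = l4 /\ l1 <> l3)) ->
        K = 1%g /\ #|D4 k : K|%g = 8).
Proof.
move=> hk hr hB l1 l2 l3 l4 K.
rewrite /l1 /l2 /l3 /l4; clear l1 l2 l3 l4.
move: hB; rewrite /in_barB => /and5P [/eqP hc h21 h31 h41 /andP [h42 himp]].
have himp' : lam1 B = lam2 B -> lam4 B <= lam3 B.
  by move=> e; move: himp; rewrite e eqxx.
clear himp.
have mR0 : (pR0 k \in K) = (FR0 (board_partition B) == board_partition B).
  by rewrite /K (@Kstab_mem k r B _ _ hc (bpR0 k)) !inE eqxx ?orbT.
have mR90 : (pR90 k \in K) = (FR90 (board_partition B) == board_partition B).
  by rewrite /K (@Kstab_mem k r B _ _ hc (bpR90 k)) !inE eqxx ?orbT.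
have mR180 : (pR180 k \in K) = (FR180 (board_partition B) == board_partition B).
  by rewrite /K (@Kstab_mem k r B _ _ hc (bpR180 k)) !inE eqxx ?orbT.
have mR270 : (pR270 k \in K) = (FR270 (board_partition B) == board_partition B).
  by rewrite /K (@Kstab_mem k r B _ _ hc (bpR270 k)) !inE eqxx ?orbT.
have mH : (pH k \in K) = (FH (board_partition B) == board_partition B).
  by rewrite /K (@Kstab_mem k r B _ _ hc (bpH k)) !inE eqxx ?orbT.
have mV : (pV k \in K) = (FV (board_partition B) == board_partition B).
  by rewrite /K (@Kstab_mem k r B _ _ hc (bpV k)) !inE eqxx ?orbT.
have mD : (pD k \in K) = (FD (board_partition B) == board_partition B).
  by rewrite /K (@Kstab_mem k r B _ _ hc (bpD k)) !inE eqxx ?orbT.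
have mDp : (pD' k \in K) = (FDp (board_partition B) == board_partition B).
  by rewrite /K (@Kstab_mem k r B _ _ hc (bpDp k)) !inE eqxx ?orbT.
move: mR0 mR90 mR180 mR270 mH mV mD mDp.
rewrite /board_partition /= !xpair_eqE => mR0 mR90 mR180 mR270 mH mV mD mDp.
clear hc hr.
have sK : K \subset D4 k by apply/subsetP => g; rewrite inE => /andP [].
have [sE1 sE2 sE3] : [/\ [set pR0 k; pD k; pD' k; pR180 k] \subset D4 k,
   [set pR0 k; pV k] \subset D4 k & [set pR0 k; pD' k] \subset D4 k].
  by split; rewrite !subUset !sub1set !inE !eqxx ?orbT.
have [sE4 sE5 sE6] : [/\ [set pR0 k; pD k] \subset D4 k, [set pR0 k] \subset D4 k & D4 k \subset D4 k].
  by split; rewrite ?subxx // ?subUset !sub1set !inE !eqxx ?orbT.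
split.
  case=> e1 [e2 e3].
  have KE : K = D4 k.
    apply: eq_D4sub => //; rewrite ?mR0 ?mR90 ?mR180 ?mR270 ?mH ?mV ?mD ?mDp !inE; neqs hk; rewrite ?eqxx /=; fin.
  split=> //; rewrite KE (@idxD4 k hk (Group (D4gs k))) //= cardD4 //.
split.
  case=> e1 [e2 e3].
  have KE : K = [set pR0 k; pD k; pD' k; pR180 k].
    apply: eq_D4sub => //; rewrite ?mR0 ?mR90 ?mR180 ?mR270 ?mH ?mV ?mD ?mDp !inE; neqs hk; rewrite ?eqxx /=; fin.
  have KE' : K = <<[set pD k; pD' k]>>%g by rewrite KE genDD'.
  split=> //; rewrite KE' (@idxD4 k hk); last by rewrite /= -KE'. rewrite /= genDD' -!setUA !cardsU1 cards1 !inE; neqs hk; done.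
split.
  case=> e1 [e2 e3].
  have KE : K = [set pR0 k; pV k].
    apply: eq_D4sub => //; rewrite ?mR0 ?mR90 ?mR180 ?mR270 ?mH ?mV ?mD ?mDp !inE; neqs hk; rewrite ?eqxx /=; fin.
  have KE' : K = <[pV k]>%g by rewrite KE cycle_inv ?invV // pR0_1.
  split=> //; rewrite KE' (@idxD4 k hk); last by rewrite /= -KE'. rewrite /= cycle_inv ?invV // cards2 -pR0_1; neqs hk; done.
split.
  case=> e1 e2.
  have KE : K = [set pR0 k; pD' k].
    apply: eq_D4sub => //; rewrite ?mR0 ?mR90 ?mR180 ?mR270 ?mH ?mV ?mD ?mDp !inE; neqs hk; rewrite ?eqxx /=; fin.
  have KE' : K = <[pD' k]>%g by rewrite KE cycle_inv ?invD' // pR0_1.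
  split=> //; rewrite KE' (@idxD4 k hk); last by rewrite /= -KE'. rewrite /= cycle_inv ?invD' // cards2 -pR0_1; neqs hk; done.
split.
  case=> e1 e2.
  have KE : K = [set pR0 k; pD k].
    apply: eq_D4sub => //; rewrite ?mR0 ?mR90 ?mR180 ?mR270 ?mH ?mV ?mD ?mDp !inE; neqs hk; rewrite ?eqxx /=; fin.
  have KE' : K = <[pD k]>%g by rewrite KE cycle_inv ?invD // pR0_1.
  split=> //; rewrite KE' (@idxD4 k hk); last by rewrite /= -KE'. rewrite /= cycle_inv ?invD // cards2 -pR0_1; neqs hk; done.
case=> n1 [n2 [n3 [n4 n5]]].
have KE : K = [set pR0 k].
  apply: eq_D4sub => //; rewrite ?mR0 ?mR90 ?mR180 ?mR270 ?mH ?mV ?mD ?mDp !inE; neqs hk; rewrite ?eqxx /=; fin.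
have KE' : K = 1%g by rewrite KE pR0_1.
split=> //; rewrite KE' (@idxD4 k hk); last by rewrite /= -KE'. rewrite /= cards1 //.
Qed.
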